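(* Let $f \in \mathbb{Z}[x]$ be a tower-stable polynomial, let $a$ be a positive integer, let $p$ be a prime number and $k$ a positive integer. Put $\kappa = \kappa_{f,a}$, $\lambda = \lambda_{f,a}$ and $$\mu_p = \prod_{i=0}^{\lambda(p)-1} f'\big(f^{\kappa(p)+i}(a)\big).$$ (i) If $\mu_p \equiv 0 \pmod p$, then $\lambda(p^k) = \lambda(p)$ and $\kappa(p^k) \le \kappa(p) + (k-1)\lambda(p)$. (ii) If $\mu_p \not\equiv 0 \pmod p$, then $\kappa(p^k) = \kappa(p)$ and $\lambda(p^k)$ divides $\lambda(p)\cdot(p-1)\cdot p^{k-1}$.
   Context: $f^j$ is the $j$-th iterate of $f$ and $f'$ its derivative. For a positive integer $n$, $f_n:\mathbb{Z}/n\mathbb{Z}\to\mathbb{Z}/n\mathbb{Z}$ is the reduction of $f$. $\kappa_{f,a}(n)$ (tail length) and $\lambda_{f,a}(n)$ (cycle length) are the unique integers $\kappa\ge0$, $\lambda\ge1$ such that for all $k'\ge0$, $l'\ge1$: $f_n^{k'}(\bar a) = f_n^{k'+l'}(\bar a)$ iff $\kappa\le k'$ and $\lambda\mid l'$, where $\bar a = a \bmod n$. $f$ is tower-stable if for every prime $q$, $f_q$ is not a cyclic permutation of $\mathbb{Z}/q\mathbb{Z}$ of length $q$. *)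

(* Defs.v *)
From mathcomp Require Import all_boot all_order all_algebra.
Set Implicit Arguments. Unset Strict Implicit. Unset Printing Implicit Defensive.
Import Order.TTheory GRing.Theory Num.Theory.

Definition iterf (f : {poly int}) (j : nat) (x : int) : int :=
  iter j (fun y => (f.[y])%R) x.

Definition congr_mod (x y : int) (n : nat) : Prop := (x == y %[mod n%:Z])%Z.

(* Since f has integer coefficients, f_n^j(x mod n) = f^j(x) mod n; hence
   f_n^{k'}(a mod n) = f_n^{k'+l'}(a mod n) iff f^{k'}(a) = f^{k'+l'}(a) mod n.
   tail_cycle f a n kappa lambda : kappa = kappa_{f,a}(n), lambda = lambda_{f,a}(n),
   i.e. kappa >= 0, lambda >= 1 and for all k' >= 0, l' >= 1:
   f_n^{k'}(a) = f_n^{k'+l'}(a)  <->  kappa <= k' and lambda | l'. *)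
Definition tail_cycle (f : {poly int}) (a : int) (n kappa lambda : nat) : Prop :=
  (1 <= lambda)%N /\
  forall k' l' : nat, (1 <= l')%N ->
    (congr_mod (iterf f k' a) (iterf f (k' + l') a) n <->
     ((kappa <= k')%N /\ (lambda %| l')%N)).

(* f_q is a cyclic permutation of Z/qZ of length q: some orbit has q pairwise
   distinct points mod q and closes up after q steps. *)
Definition full_cycle_mod (f : {poly int}) (q : nat) : Prop :=
  exists x : int,
    (forall i j : nat, (i < q)%N -> (j < q)%N ->
       congr_mod (iterf f i x) (iterf f j x) q -> i = j) /\
    congr_mod (iterf f q x) x q.

Definition tower_stable (f : {poly int}) : Prop :=
  forall q : nat, prime q -> ~ full_cycle_mod f q.

(* Main.v *)
Require Import Defs.
From mathcomp Require Import all_boot all_order all_algebra all_field.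
From mathcomp Require Import ring zify.
Import Order.TTheory GRing.Theory Num.Theory.
Local Open Scope ring_scope.

Lemma taylor (f : {poly int}) (x y : int) :
  exists h, f.[y] - f.[x] = (y - x) * f^`().[x] + (y - x) ^+ 2 * h.
Proof.
elim/poly_ind: f => [|q c [h IH]].
  by exists 0; rewrite deriv0 !horner0; ring.
move/eqP: IH; rewrite subr_eq => /eqP E.
exists (q^`().[x] + h * y).
rewrite derivMXaddC !hornerMXaddC hornerD hornerM hornerX E; ring.
Qed.

Lemma step (f : {poly int}) (d y z : int) : (d %| y - z)%Z ->
  exists w, f.[y] - f.[z] = (y - z) * (f^`().[z] + d * w).
Proof.
case/dvdzP=> t Ht; have [h ->] := taylor f z y.
exists (t * h).
have -> : (y - z) ^+ 2 = (y - z) * (t * d) by rewrite -Ht expr2.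
ring.
Qed.

Lemma dvd_poly (f : {poly int}) (d y z : int) : (d %| y - z)%Z -> (d %| f.[y] - f.[z])%Z.
Proof. move=> H; have [w ->] := @step f _ _ _ H; exact: dvdz_mulr. Qed.

Lemma dvd_iter (f : {poly int}) (d : int) n y z : (d %| y - z)%Z ->
  (d %| iterf f n y - iterf f n z)%Z.
Proof. move=> H; elim: n => [|n IH] //=; exact: dvd_poly. Qed.

Lemma iterfD f n m x : iterf f n (iterf f m x) = iterf f (n + m) x.
Proof. by rewrite /iterf iterD. Qed.

Lemma iter_step (f : {poly int}) (d : int) n y z : (d %| y - z)%Z ->
  exists w, iterf f n y - iterf f n z =
    (y - z) * (\prod_(i < n) f^`().[iterf f i z] + d * w).
Proof.
move=> H; elim: n => [|n [w1 IH]].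
  by exists 0; rewrite big_ord0 /=; ring.
have HYZ : (d %| iterf f n y - iterf f n z)%Z by exact: dvd_iter.
have [w2 E] := @step f _ _ _ HYZ.
exists (w1 * f^`().[iterf f n z] + (\prod_(i < n) f^`().[iterf f i z]) * w2 + d * w1 * w2).
rewrite big_ord_recr /=.
rewrite E IH; ring.
Qed.

Lemma prod_congr (d : int) n (F G : nat -> int) :
  (forall i, (i < n)%N -> (d %| F i - G i)%Z) ->
  (d %| \prod_(i < n) F i - \prod_(i < n) G i)%Z.
Proof.
elim: n => [|n IH] H; first by rewrite !big_ord0 subrr dvdz0.
rewrite !big_ord_recr /=.
have -> : \prod_(i < n) F i * F n - \prod_(i < n) G i * G n =
  (\prod_(i < n) F i - \prod_(i < n) G i) * F n + \prod_(i < n) G i * (F n - G n) by ring.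
rewrite rpredD //; first by apply: dvdz_mulr; apply: IH => i Hi; apply: H; lia.
by apply: dvdz_mull; apply: H.
Qed.

Lemma fermat_int (p : nat) (u : int) : prime p -> ~~ (p%:Z %| u)%Z ->
  (p%:Z %| u ^+ p.-1 - 1)%Z.
Proof.
move=> pp; rewrite !(dvdz_pcharf (pchar_Fp pp)) rmorphB rmorphXn rmorph1 /= subr_eq0.
set x := (u%:~R : 'F_p) => nx.
have E := expf_card x; rewrite card_Fp // in E.
have : x ^+ p.-1.+1 = x by rewrite prednK ?prime_gt0.
rewrite exprS.
by move=> E2; apply/eqP; apply: (mulfI nx); rewrite E2 mulr1.
Qed.
Definition good (f : {poly int}) (d x : int) (N : nat) (u : int) :=
  forall y z, (d %| y - x)%Z -> (d %| z - x)%Z ->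
  exists w, iterf f N y - iterf f N z = (y - z) * (u + d * w).

Lemma good_comp f d x N1 N2 u1 u2 : good f d x N1 u1 -> good f d x N2 u2 ->
  (forall y, (d %| y - x)%Z -> (d %| iterf f N1 y - x)%Z) ->
  good f d x (N2 + N1) (u1 * u2).
Proof.
move=> G1 G2 C y z Hy Hz; rewrite -!iterfD.
have [w1 E1] := G1 y z Hy Hz.
have [w2 E2] := G2 _ _ (C y Hy) (C z Hz).
exists (w1 * u2 + u1 * w2 + d * w1 * w2); rewrite E2 E1; ring.
Qed.

Lemma good_congr f d x N u u' : good f d x N u -> (d %| u - u')%Z -> good f d x N u'.
Proof.
move=> G /dvdzP [t Ht] y z Hy Hz; have [w E] := G y z Hy Hz.
exists (t + w); rewrite E.
have -> : u = u' + t * d by rewrite -Ht; ring.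
ring.
Qed.

Lemma dvd_pow_1 (d X : int) n : (d %| X - 1)%Z -> (d %| X ^+ n - 1)%Z.
Proof.
move=> H; elim: n => [|n IH]; first by rewrite expr0 subrr dvdz0.
have -> : X ^+ n.+1 - 1 = X * (X ^+ n - 1) + (X - 1) by rewrite exprS; ring.
by rewrite rpredD // dvdz_mull.
Qed.

Lemma class_pres f a p kp lp : tail_cycle f a p kp lp ->
  forall j y, (p%:Z %| y - iterf f kp a)%Z ->
  (p%:Z %| iterf f (lp * j) y - iterf f kp a)%Z.
Proof.
move=> [lp1 Hp] j y Hy.
have -> : iterf f (lp * j) y - iterf f kp a =
  (iterf f (lp * j) y - iterf f (lp * j) (iterf f kp a)) +
  (iterf f (lp * j) (iterf f kp a) - iterf f kp a) by ring.
rewrite rpredD //; first exact: dvd_iter.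
case: j => [|j]; first by rewrite muln0 subrr dvdz0.
rewrite iterfD addnC -opprB rpredN -eqz_mod_dvd.
by apply/(Hp kp (lp * j.+1)); [rewrite muln_gt0 lp1 | rewrite leqnn dvdn_mulr].
Qed.

Arguments class_pres {f a p kp lp}.

Lemma good_base f a p kp lp : tail_cycle f a p kp lp ->
  good f p (iterf f kp a) lp (\prod_(i < lp) f^`().[iterf f (kp + i) a]).
Proof.
move=> Hp y z Hy Hz.
have Hyz : (p%:Z %| y - z)%Z.
  have -> : y - z = (y - iterf f kp a) - (z - iterf f kp a) by ring.
  by rewrite rpredB.
have [w E] := @iter_step f _ lp _ _ Hyz.
have : (p%:Z %| \prod_(i < lp) f^`().[iterf f i z] -
                \prod_(i < lp) f^`().[iterf f (kp + i) a])%Z.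
  apply: (@prod_congr _ _ (fun i : nat => f^`().[iterf f i z]) (fun i : nat => f^`().[iterf f (kp + i) a])).
  move=> i _ /=; apply: dvd_poly; rewrite addnC -iterfD; exact: dvd_iter.
case/dvdzP => t Ht; exists (t + w); rewrite E.
have -> : \prod_(i < lp) f^`().[iterf f i z] =
   \prod_(i < lp) f^`().[iterf f (kp + i) a] + t * p by rewrite -Ht; ring.
ring.
Qed.

Arguments good_base {f a p kp lp}.

Lemma good_mult f a p kp lp : tail_cycle f a p kp lp -> forall j,
  good f p (iterf f kp a) (lp * j) ((\prod_(i < lp) f^`().[iterf f (kp + i) a]) ^+ j).
Proof.
move=> Hp; elim => [|j IH].
  by rewrite muln0 expr0 => y z _ _; exists 0; rewrite /=; ring.
rewrite mulnSr exprS; apply: good_comp => //; first exact: good_base.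
by move=> y Hy; have := class_pres Hp 1 _ Hy; rewrite muln1.
Qed.

Arguments good_mult {f a p kp lp}.
Lemma PoszX' (p k : nat) : (p ^ k)%N%:Z = p%:Z ^+ k.
Proof. by rewrite -natz natrX natz. Qed.

Lemma part1 f a p kp lp : tail_cycle f a p kp lp ->
  (p%:Z %| \prod_(i < lp) f^`().[iterf f (kp + i) a])%Z -> forall j,
  (p%:Z ^+ j.+1 %| iterf f (lp * j.+1) (iterf f kp a) - iterf f (lp * j) (iterf f kp a))%Z.
Proof.
move=> Hp Hmu; elim => [|j IH].
  rewrite muln1 muln0 expr1 /=.
  have := class_pres Hp 1 (iterf f kp a); rewrite muln1 subrr; apply; exact: dvdz0.
have C : forall i, (p%:Z %| iterf f (lp * i) (iterf f kp a) - iterf f kp a)%Z.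
  by move=> i; apply: (class_pres Hp); rewrite subrr dvdz0.
have [w E] := good_base Hp _ _ (C j.+1) (C j).
have S : forall i, iterf f (lp * i.+1) (iterf f kp a) = iterf f lp (iterf f (lp * i) (iterf f kp a)).
  by move=> i; rewrite [in RHS]iterfD mulnS.
rewrite (S j.+1) {2}(S j) E exprSr.
apply: dvdz_mul => //; rewrite rpredD // dvdz_mulr //.
Qed.

Arguments part1 {f a p kp lp}.

Lemma part2 f a p kp lp : prime p -> tail_cycle f a p kp lp ->
  ~~ (p%:Z %| \prod_(i < lp) f^`().[iterf f (kp + i) a])%Z -> forall m,
  (p%:Z ^+ m.+1 %| iterf f (lp * ((p - 1) * p ^ m)) (iterf f kp a) - iterf f kp a)%Z.
Proof.
move=> pp Hp Hmu; set x := iterf f kp a.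
have Cx : (p%:Z %| x - x)%Z by rewrite subrr dvdz0.
elim => [|m IH].
  by rewrite expr1; apply: (class_pres Hp).
set K := (lp * ((p - 1) * p ^ m))%N.
have G : good f p x K 1.
  apply: good_congr (good_mult Hp _) _.
  rewrite exprM; apply: dvd_pow_1; rewrite subn1; exact: fermat_int.
have CY : forall j, (p%:Z %| iterf f (K * j) x - x)%Z.
  by move=> j; rewrite /K -mulnA; apply: (class_pres Hp).
have L : forall j, (p%:Z ^+ m.+2 %| iterf f (K * j) x - x - j%:Z * (iterf f K x - x))%Z.
  elim => [|j IHj]; first by rewrite muln0 /= mul0r !subrr dvdz0.
  rewrite mulnS -iterfD.
  have [w E] := G _ _ (CY j) Cx.
  have -> : iterf f K (iterf f (K * j) x) - x - (j.+1)%:Z * (iterf f K x - x) =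
    (iterf f K (iterf f (K * j) x) - iterf f K x) - (iterf f (K * j) x - x) +
    (iterf f (K * j) x - x - j%:Z * (iterf f K x - x)) by rewrite -addn1 PoszD; ring.
  rewrite E rpredD //.
  have D : (p%:Z ^+ m.+1 %| iterf f (K * j) x - x)%Z.
    have -> : iterf f (K * j) x - x = (iterf f (K * j) x - x - j%:Z * (iterf f K x - x))
       + j%:Z * (iterf f K x - x) by ring.
    rewrite rpredD ?dvdz_mull //.
    by apply: dvdz_trans IHj; apply: dvdz_exp2l.
  have -> : (iterf f (K * j) x - x) * (1 + p%:Z * w) - (iterf f (K * j) x - x)
     = (iterf f (K * j) x - x) * p%:Z * w by ring.
  by rewrite exprSr; apply: dvdz_mulr; apply: dvdz_mul.
have -> : (lp * ((p - 1) * p ^ m.+1) = K * p)%N by rewrite /K expnSr !mulnA.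
have -> : iterf f (K * p) x - x = (iterf f (K * p) x - x - p%:Z * (iterf f K x - x))
   + p%:Z * (iterf f K x - x) by ring.
by rewrite rpredD // exprS dvdz_mul.
Qed.

Arguments part2 {f a p kp lp}.

Lemma reduce_mod u v p k : (0 < k)%N -> congr_mod u v (p ^ k) -> congr_mod u v p.
Proof.
move=> k0; rewrite /congr_mod !eqz_mod_dvd; apply: dvdz_trans.
by rewrite dvdzE /= dvdn_exp.
Qed.

Arguments reduce_mod {u v p k}.

Theorem theorem4p3 (f : {poly int}) (a : int) (p k : nat)
    (kp lp kpk lpk : nat) :
  tower_stable f -> (0 < a)%R -> prime p -> (0 < k)%N ->
  tail_cycle f a p kp lp ->
  tail_cycle f a (p ^ k) kpk lpk ->
  let mu : int := (\prod_(i < lp) (deriv f).[iterf f (kp + i) a])%R in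
  ((p%:Z %| mu)%Z -> lpk = lp /\ (kpk <= kp + (k - 1) * lp)%N) /\
  (~~ (p%:Z %| mu)%Z -> kpk = kp /\ (lpk %| lp * (p - 1) * p ^ (k - 1))%N).
Proof.
move=> _ _ pp k0 Hp Hpk mu.
have [lp1 Hp2] := Hp; have [lpk1 Hpk2] := Hpk.
have [kkp lplpk] : (kp <= kpk)%N /\ (lp %| lpk)%N.
  apply/(Hp2 _ _ lpk1); apply: (reduce_mod k0); apply/(Hpk2 _ _ lpk1).
  by rewrite leqnn dvdnn.
have Ea : forall n, iterf f (kp + n) a = iterf f n (iterf f kp a).
  by move=> n; rewrite iterfD addnC.
split=> Hmu.
  have := part1 Hp Hmu (k - 1).
  have -> : (k - 1).+1 = k by lia.
  move=> D.
  have [H1 H2] : (kpk <= kp + (k - 1) * lp)%N /\ (lpk %| lp)%N.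
    apply/(Hpk2 _ _ lp1).
    rewrite /congr_mod eqz_mod_dvd PoszX' -addnA !Ea.
    have -> : ((k - 1) * lp + lp = lp * k)%N by rewrite mulnC -mulnSr; congr (_ * _); lia.
    by rewrite mulnC -opprB rpredN.
  by split=> //; apply/eqP; rewrite eqn_dvd H2.
have D := part2 pp Hp Hmu (k - 1).
have Ek : (k - 1).+1 = k by lia.
rewrite Ek in D.
have [H1 H2] : (kpk <= kp)%N /\ (lpk %| lp * ((p - 1) * p ^ (k - 1)))%N.
  apply/(Hpk2 _ _ _).
  - have := prime_gt1 pp; rewrite !muln_gt0 lp1 expn_gt0 /=; lia.
  by rewrite /congr_mod eqz_mod_dvd PoszX' Ea -opprB rpredN.
by split; [apply/eqP; rewrite eqn_leq H1 kkp | rewrite -mulnA].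
Qed.
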